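(* Let $A(\bar y)$ be a quantifier-free formula containing no function symbols of positive arity, let $C$ be the (finite) set of constants occurring in $A$, or $C=\{c_0\}$ for a fixed constant $c_0$ if $A$ contains none. Then for every Gödel set $V$, the sentence $\exists\bar y\,A(\bar y)$ is valid in $G_V$ if and only if there are finitely many tuples $\bar t_1,\dots,\bar t_n$ of constants from $C$ such that the quantifier-free sentence $A(\bar t_1)\vee\dots\vee A(\bar t_n)$ is valid in $G_V$.
   Context: A Gödel set is a closed set $V\subseteq[0,1]$ with $0,1\in V$. A $V$-interpretation assigns to each $k$-ary predicate a function $U^k\to V$ on a nonempty domain $U$ (constants as usual); $\bot\mapsto0$, $\wedge,\vee$ are $\min,\max$, $\mathcal I(A\supset B)=1$ if $\mathcal I(A)\le\mathcal I(B)$ and $=\mathcal I(B)$ otherwise, $\forall,\exists$ are $\inf,\sup$ over $U$. A sentence is valid in $G_V$ if every $V$-interpretation gives it value $1$. *)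

(* Defs.v *)
From HB Require Import structures.
From mathcomp Require Import all_boot all_order all_algebra.
From mathcomp Require Import all_classical all_reals topology normedtype.
Set Implicit Arguments. Unset Strict Implicit. Unset Printing Implicit Defensive.
Import Order.TTheory GRing.Theory Num.Theory numFieldNormedType.Exports.
Local Open Scope ring_scope.
Local Open Scope classical_set_scope.

(* There are no function symbols of positive arity (the
   formula A of the statement contains none, so they are irrelevant). *)
Inductive term : Type :=
| Var : nat -> term
| Const : nat -> term.

(* A predicate symbol p applied to a list of k terms is the k-ary predicate
   (p,k); its interpretation is the restriction of [I_pred p] to lists of
   length k. *)
Inductive fml : Type :=
| Atom : nat -> seq term -> fml
| Bot : fml
| And : fml -> fml -> fml
| Or : fml -> fml -> fml
| Imp : fml -> fml -> fml
| All : nat -> fml -> fml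
| Ex : nat -> fml -> fml.

Fixpoint qfree (f : fml) : bool :=
  match f with
  | Atom _ _ | Bot => true
  | And a b | Or a b | Imp a b => qfree a && qfree b
  | All _ _ | Ex _ _ => false
  end.

Definition term_vars (t : term) : seq nat :=
  match t with Var v => [:: v] | Const _ => [::] end.
Definition term_consts (t : term) : seq nat :=
  match t with Var _ => [::] | Const c => [:: c] end.

Fixpoint free_vars (f : fml) : seq nat :=
  match f with
  | Atom _ ts => flatten (map term_vars ts)
  | Bot => [::]
  | And a b | Or a b | Imp a b => free_vars a ++ free_vars b
  | All x a | Ex x a => seq.filter (fun v => v != x) (free_vars a)
  end.

Fixpoint consts (f : fml) : seq nat :=
  match f with
  | Atom _ ts => flatten (map term_consts ts)
  | Bot => [::]
  | And a b | Or a b | Imp a b => consts a ++ consts b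
  | All _ a | Ex _ a => consts a
  end.

Definition exs (ys : seq nat) (A : fml) : fml := foldr Ex A ys.

(* Substitution of the constant tuple ts for the variable tuple ys in a
   quantifier-free formula (bound variables are left alone, which is correct
   substitution for quantifier-free formulas). *)
Definition inst_term (ys ts : seq nat) (t : term) : term :=
  match t with
  | Var v => if v \in ys then Const (nth 0%N ts (index v ys)) else Var v
  | Const c => Const c
  end.

Fixpoint inst (ys ts : seq nat) (f : fml) : fml :=
  match f with
  | Atom p args => Atom p (map (inst_term ys ts) args)
  | Bot => Bot
  | And a b => And (inst ys ts a) (inst ys ts b)
  | Or a b => Or (inst ys ts a) (inst ys ts b)
  | Imp a b => Imp (inst ys ts a) (inst ys ts b)
  | All x a => All x (inst ys ts a)
  | Ex x a => Ex x (inst ys ts a)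
  end.

Fixpoint disj (a : fml) (l : seq fml) : fml :=
  match l with
  | [::] => a
  | b :: l' => Or a (disj b l')
  end.

Definition goedel_set (R : realType) (V : set R) : Prop :=
  closed V /\ V `<=` `[0, 1] /\ V 0 /\ V 1.

Section Semantics.
Variables (R : realType) (U : Type).
Variables (I_const : nat -> U) (I_pred : nat -> seq U -> R).

Definition teval (e : nat -> U) (t : term) : U :=
  match t with Var v => e v | Const c => I_const c end.

Definition upd (e : nat -> U) (x : nat) (u : U) : nat -> U :=
  fun v => if v == x then u else e v.

Fixpoint eval (e : nat -> U) (f : fml) : R :=
  match f with
  | Atom p ts => I_pred p (map (teval e) ts)
  | Bot => 0
  | And a b => Num.min (eval e a) (eval e b)
  | Or a b => Num.max (eval e a) (eval e b)
  | Imp a b => if eval e a <= eval e b then 1 else eval e b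
  | All x a => inf (range (fun u => eval (upd e x u) a))
  | Ex x a => sup (range (fun u => eval (upd e x u) a))
  end.
End Semantics.

(* A V-interpretation: nonempty domain, constants interpreted in U, predicates
   take values in V. *)
Definition valid_in (R : realType) (V : set R) (f : fml) : Prop :=
  forall (U : Type) (u0 : U) (I_const : nat -> U) (I_pred : nat -> seq U -> R),
    (forall p args, V (I_pred p args)) ->
    forall e : nat -> U, eval I_const I_pred e f = 1.

(* Main.v *)
Require Import Defs.
From mathcomp Require Import all_boot all_order all_algebra.
From mathcomp Require Import all_classical all_reals topology normedtype.
Import Order.TTheory GRing.Theory Num.Theory.
Set Implicit Arguments. Unset Strict Implicit.

Section Aux.
Local Open Scope ring_scope.
Local Open Scope classical_set_scope.

Fixpoint updl (U : Type) (e : nat -> U) (ys : seq nat) (us : seq U) : nat -> U :=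
  match ys, us with
  | y :: ys', u :: us' => updl (upd e y u) ys' us'
  | _, _ => e
  end.

Lemma updl_out (U : Type) (e : nat -> U) ys us v :
  v \notin ys -> updl e ys us v = e v.
Proof.
elim: ys us e => [|y ys IH] [|u us] e //=.
rewrite inE negb_or => /andP [vy vys].
by rewrite IH // /upd (negbTE vy).
Qed.

Lemma updl_in (U : Type) (e : nat -> U) ys us v d :
  uniq ys -> size us = size ys -> v \in ys ->
  updl e ys us v = nth d us (index v ys).
Proof.
elim: ys us e => [|y ys IH] [|u us] e //= /andP [yn uq] [hs].
rewrite inE; case: (eqVneq v y) => [-> _|vy /= vin].
  by rewrite updl_out // /upd eqxx.
by rewrite IH.
Qed.

Variable R : realType.

Lemma eval_bound (V : set R) (U : Type) (u0 : U) Ic (Ip : nat -> seq U -> R) :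
  V `<=` `[0, 1] -> (forall p a, V (Ip p a)) ->
  forall F e, 0 <= Defs.eval Ic Ip e F <= 1.
Proof.
move=> HV HI; elim=> [p ts| |a IHa b IHb|a IHa b IHb|a IHa b IHb|x a IHa|x a IHa] e /=.
- by have := HV _ (HI p (map (teval Ic e) ts)); rewrite /= in_itv.
- by rewrite lexx ler01.
- have /andP[a0 a1] := IHa e; have /andP[b0 b1] := IHb e.
  by rewrite le_min a0 b0 /= ge_min a1 b1 orbT.
- have /andP[a0 a1] := IHa e; have /andP[b0 b1] := IHb e.
  by rewrite le_max a0 b0 /= ge_max a1 b1.
- by case: ifP => _; [rewrite ler01 lexx| apply IHb].
- have ne : range (fun u => Defs.eval Ic Ip (upd e x u) a) !=set0.
    by exists (Defs.eval Ic Ip (upd e x u0) a); exists u0.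
  have lb : has_lbound (range (fun u => Defs.eval Ic Ip (upd e x u) a)).
    by exists 0 => _ [u _ <-]; have /andP[] := IHa (upd e x u).
  apply/andP; split.
    by apply: lb_le_inf => // _ [u _ <-]; have /andP[] := IHa (upd e x u).
  apply: le_trans (_ : Defs.eval Ic Ip (upd e x u0) a <= 1).
    by apply: ge_inf => //; exists u0.
  by have /andP[] := IHa (upd e x u0).
- have ne : range (fun u => Defs.eval Ic Ip (upd e x u) a) !=set0.
    by exists (Defs.eval Ic Ip (upd e x u0) a); exists u0.
  have ub : has_ubound (range (fun u => Defs.eval Ic Ip (upd e x u) a)).
    by exists 1 => _ [u _ <-]; have /andP[] := IHa (upd e x u).
  apply/andP; split.
    apply: le_trans (_ : Defs.eval Ic Ip (upd e x u0) a <= _).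
      by have /andP[] := IHa (upd e x u0).
    by apply: ub_le_sup => //; exists u0.
  by apply: ge_sup => // _ [u _ <-]; have /andP[] := IHa (upd e x u).
Qed.

Lemma eval_map (U1 U2 : Type) (I1c : nat -> U1) (I1p : nat -> seq U1 -> R)
  (I2c : nat -> U2) (I2p : nat -> seq U2 -> R) (h : U1 -> U2) e1 e2 F :
  qfree F ->
  (forall p l, I1p p l = I2p p (map h l)) ->
  (forall v, v \in free_vars F -> h (e1 v) = e2 v) ->
  (forall c, c \in consts F -> h (I1c c) = I2c c) ->
  Defs.eval I1c I1p e1 F = Defs.eval I2c I2p e2 F.
Proof.
move=> + Hp; elim: F => [p ts| |a IHa b IHb|a IHa b IHb|a IHa b IHb|//|//] //= qf Hv Hc.
- rewrite Hp -map_comp; congr (I2p p _); move: Hv Hc; elim: ts {qf} => [//|t ts IH] /= Hv Hc.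
  rewrite IH; last first.
  - by move=> c cin; apply: Hc; rewrite mem_cat cin orbT.
  - by move=> v vin; apply: Hv; rewrite mem_cat vin orbT.
  congr (_ :: _); case: t Hv Hc => [v|c] /= Hv Hc; [apply: Hv|apply: Hc]; by rewrite inE eqxx.
- move/andP: qf => [qa qb].
  rewrite IHa ?IHb // => [v|c|v|c] H; [apply: Hv|apply: Hc|apply: Hv|apply: Hc];
    by rewrite mem_cat H ?orbT.
- move/andP: qf => [qa qb].
  rewrite IHa ?IHb // => [v|c|v|c] H; [apply: Hv|apply: Hc|apply: Hv|apply: Hc];
    by rewrite mem_cat H ?orbT.
- move/andP: qf => [qa qb].
  rewrite IHa ?IHb // => [v|c|v|c] H; [apply: Hv|apply: Hc|apply: Hv|apply: Hc];
    by rewrite mem_cat H ?orbT.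
Qed.

Lemma eval_inst (U : Type) Ic (Ip : nat -> seq U -> R) e ys t F :
  qfree F ->
  Defs.eval Ic Ip e (inst ys t F) =
  Defs.eval Ic Ip (fun v => if v \in ys then Ic (nth 0%N t (index v ys)) else e v) F.
Proof.
elim: F => [p ts| |a IHa b IHb|a IHa b IHb|a IHa b IHb|//|//] //= qf.
- rewrite -map_comp; congr (Ip p _); apply: eq_map => -[v|c] //=.
  by case: ifP.
- by move/andP: qf => [qa qb]; rewrite IHa ?IHb.
- by move/andP: qf => [qa qb]; rewrite IHa ?IHb.
- by move/andP: qf => [qa qb]; rewrite IHa ?IHb.
Qed.

Fixpoint inl (b : fml) (l : seq fml) : Prop :=
  match l with [::] => False | x :: l' => b = x \/ inl b l' end.

Lemma disj_ge (U : Type) Ic (Ip : nat -> seq U -> R) e a l b :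
  inl b (a :: l) -> Defs.eval Ic Ip e b <= Defs.eval Ic Ip e (disj a l).
Proof.
elim: l a => [|b' l IH] a /=; first by case=> [->|[]].
case=> [->|bin]; rewrite le_max ?lexx //.
by rewrite IH ?orbT.
Qed.

Lemma disj_att (U : Type) Ic (Ip : nat -> seq U -> R) e a l :
  exists2 b, inl b (a :: l) & Defs.eval Ic Ip e (disj a l) = Defs.eval Ic Ip e b.
Proof.
elim: l a => [|b' l IH] a /=; first by exists a; [left|].
have [b bin ->] := IH b'.
rewrite maxEle; case: ifP => _.
  by exists b => //; right.
by exists a; [left|].
Qed.

Lemma exs_ge (U : Type) Ic (Ip : nat -> seq U -> R) (V : set R) (u0 : U) A :
  V `<=` `[0, 1] -> (forall p a, V (Ip p a)) ->
  forall ys us e, size us = size ys ->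
  Defs.eval Ic Ip (updl e ys us) A <= Defs.eval Ic Ip e (exs ys A).
Proof.
move=> HV HI; elim=> [|y ys IH] [|u us] e //= [hs].
apply: le_trans (IH us (upd e y u) hs) _.
apply: ub_le_sup; last by exists u.
by exists 1 => _ [w _ <-]; have /andP[] := eval_bound u0 Ic HV HI (exs ys A) (upd e y w).
Qed.

Fixpoint tuples (C : seq nat) (n : nat) : seq (seq nat) :=
  match n with
  | 0 => [:: [::]]
  | n'.+1 => [seq c :: t | c <- C, t <- tuples C n']
  end.

Lemma mem_tuples C n t :
  (t \in tuples C n) = (size t == n) && all (fun c => c \in C) t.
Proof.
elim: n t => [|n IH] [|c t] //=.
- by apply/negbTE/allpairsP => -[[x y] [_ _ ]].
- apply/allpairsP/idP => [[[x y] /= [xin yin [-> ->]]]|].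
    by move: yin; rewrite IH eqSS xin => /andP[-> ->].
  rewrite eqSS => /and3P [sz cin tin]; exists (c, t) => /=; split => //.
  by rewrite IH sz.
Qed.


Lemma inl_map (f : seq nat -> fml) (ts : seq (seq nat)) t :
  t \in ts -> inl (f t) (map f ts).
Proof.
elim: ts => [//|t' ts IH] /=; rewrite inE => /orP [/eqP ->|tin]; first by left.
by right; apply: IH.
Qed.

Lemma inl_mapP (f : seq nat -> fml) (ts : seq (seq nat)) b :
  inl b (map f ts) -> exists2 t, t \in ts & b = f t.
Proof.
elim: ts => [//|t' ts IH] /= [->|/IH [t tin ->]]; first by exists t'; rewrite ?inE ?eqxx.
by exists t; rewrite // inE tin orbT.
Qed.

Lemma argmax (f : nat -> R) (C : seq nat) : C != [::] ->
  exists2 c, c \in C & forall c', c' \in C -> f c' <= f c.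
Proof.
elim: C => [//|c C IH] _.
case: (eqVneq C [::]) => [->|/IH [d din Hd]].
  by exists c; rewrite ?inE // => c'; rewrite inE => /eqP ->.
case: (leP (f c) (f d)) => H.
  exists d; first by rewrite inE din orbT.
  by move=> c'; rewrite inE => /orP [/eqP ->//|/Hd].
exists c; first by rewrite inE eqxx.
move=> c'; rewrite inE => /orP [/eqP ->//|/Hd H']; exact: le_trans H' (ltW H).
Qed.

Lemma eval_inv (U : Type) (g : nat -> U) (Ip : nat -> seq U -> R) (Ic' : nat -> nat) F :
  forall e1 e2 : nat -> nat, (forall v, g (e1 v) = g (e2 v)) ->
  Defs.eval Ic' (fun p l => Ip p (map g l)) e1 F = Defs.eval Ic' (fun p l => Ip p (map g l)) e2 F.
Proof.
elim: F => [p ts| |a IHa b IHb|a IHa b IHb|a IHa b IHb|x a IHa|x a IHa] e1 e2 H /=.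
- by rewrite -!map_comp; congr (Ip p _); apply: eq_map => -[v|c] /=.
- by [].
- by rewrite (IHa _ e2) // (IHb _ e2).
- by rewrite (IHa _ e2) // (IHb _ e2).
- by rewrite (IHa _ e2) // (IHb _ e2).
- do 2 f_equal; apply/funext => u; apply: IHa => v; rewrite /upd; by case: ifP.
- do 2 f_equal; apply/funext => u; apply: IHa => v; rewrite /upd; by case: ifP.
Qed.

Lemma exs_le (U : Type) (V : set R) (u0 : U) (g : nat -> U) (Ip : nat -> seq U -> R)
  (C : seq nat) (proj : nat -> nat) A :
  V `<=` `[0, 1] -> (forall p a, V (Ip p a)) ->
  (forall n, proj n \in C) -> (forall n, g (proj n) = g n) ->
  forall ys (e : nat -> nat), exists t, [/\ size t = size ys, all (fun c => c \in C) t &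
    Defs.eval id (fun p l => Ip p (map g l)) e (exs ys A) <=
    Defs.eval id (fun p l => Ip p (map g l)) (updl e ys t) A].
Proof.
move=> HV HI Hp Hg; elim=> [|y ys IH] e /=; first by exists [::].
set f := fun u => Defs.eval id (fun p l => Ip p (map g l)) (upd e y u) (exs ys A).
have CN : C != [::] by apply/negP => /eqP C0; move: (Hp 0%N); rewrite C0.
have [c cin Hc] := argmax f CN.
have [t [st alt Ht]] := IH (upd e y c).
exists (c :: t); split => //=; first by rewrite st.
  by rewrite cin.
apply: le_trans Ht.
apply: ge_sup; first by exists (f 0%N); exists 0%N.
move=> _ [u _ <-].
have -> : f u = f (proj u).
  rewrite /f; apply: eval_inv => v; rewrite /upd; case: ifP => // _.
by apply: Hc.
Qed.

End Aux.

Theorem corollary5p2 (R : realType) (V : set R) (c0 : nat)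
    (ys : seq nat) (A : fml) :
  goedel_set V ->
  qfree A ->
  uniq ys ->
  {subset free_vars A <= ys} ->
  let C := if consts A is [::] then [:: c0] else consts A in
  valid_in V (exs ys A) <->
  exists (t1 : seq nat) (ts : seq (seq nat)),
    all (fun t => (size t == size ys) && all (fun c => c \in C) t) (t1 :: ts) /\
    valid_in V (disj (inst ys t1 A) (map (fun t => inst ys t A) ts)).
Proof.
move=> [_ [HV _]] qA uys Hfv C.
have HcC : forall c, c \in consts A -> c \in C.
  by rewrite /C; case: (consts A).
split.
- move=> Hval.
  set cd := head c0 C.
  have cdC : cd \in C by rewrite /cd /C; case: (consts A) => [|x l]; rewrite /= inE eqxx.
  exists (nseq (size ys) cd), (tuples C (size ys)); split.
    rewrite /= size_nseq eqxx /=; apply/andP; split.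
      by apply/allP => x; rewrite mem_nseq => /andP [_ /eqP ->].
    by apply/allP => x; rewrite mem_tuples.
  move=> U u0 Ic Ip HI e.
  pose proj n := if n \in C then n else cd.
  have Hp : forall n, proj n \in C by move=> n; rewrite /proj; case: ifP.
  pose g n := Ic (proj n).
  have Hg : forall n, g (proj n) = g n.
    by move=> n; rewrite /g {1}/proj (Hp n).
  have HI' : forall p l, V ((fun p l => Ip p (map g l)) p l) by move=> p l; apply: HI.
  have H1 := Hval nat 0%N id _ HI' (fun _ => 0%N).
  have [t [st alt Ht]] := exs_le u0 A HV HI Hp Hg ys (fun _ => 0%N).
  rewrite H1 in Ht.
  apply/le_anti/andP; split.
    by have /andP[] := eval_bound u0 Ic HV HI
      (disj (inst ys (nseq (size ys) cd) A) [seq inst ys t0 A | t0 <- tuples C (size ys)]) e.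
  apply: le_trans Ht _.
  have Hd : (Defs.eval Ic Ip e (inst ys t A) <= Defs.eval Ic Ip e (disj (inst ys (nseq (size ys) cd) A)
      [seq inst ys t0 A | t0 <- tuples C (size ys)]))%R.
    apply: disj_ge; right; apply: (inl_map (fun t => inst ys t A)).
    by rewrite mem_tuples st eqxx.
  apply: le_trans Hd.
  rewrite eval_inst //.
  rewrite le_eqVlt; apply/orP; left; apply/eqP; apply: (eval_map (h := g)) => //.
  + move=> v /Hfv vin; rewrite vin (updl_in _ 0%N) ?st //.
    rewrite /g /proj (allP alt) // mem_nth // st index_mem //.
  + by move=> c /HcC cC; rewrite /g /proj cC.
- move=> [t1 [ts [Hall Hval]]] U u0 Ic Ip HI e.
  have [b bin Hb] := disj_att Ic Ip e (inst ys t1 A) (map (fun t => inst ys t A) ts).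
  have [t tin bE] : exists2 t, t \in t1 :: ts & b = inst ys t A.
    case: bin => [->|/inl_mapP [t tin ->]]; first by exists t1; rewrite ?inE ?eqxx.
    by exists t; rewrite // inE tin orbT.
  move: Hb; rewrite (Hval U u0 Ic Ip HI e) bE eval_inst // => Hb.
  have /andP [/eqP st _] := allP Hall t tin.
  apply/le_anti/andP; split.
    by have /andP[] := eval_bound u0 Ic HV HI (exs ys A) e.
  rewrite Hb.
  have Hx := exs_ge Ic u0 A HV HI (ys:=ys) (us:=map Ic t) e.
  rewrite size_map st in Hx; have {}Hx := Hx erefl.
  apply: le_trans Hx.
  rewrite le_eqVlt; apply/orP; left; apply/eqP; apply: (eval_map (h := fun x => x)) => //.
  + by move=> p l; rewrite map_id.
  + move=> v /Hfv vin; rewrite vin (updl_in _ (Ic 0%N)) ?size_map ?st //.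
    by rewrite (nth_map 0%N) // st index_mem.
Qed.
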